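(* For each $N\ge1$ (with $h=1/(N+1)$) let $Q_h=[q_{ij}(h)]_{1\le i,j\le N}\in\mathcal M_N(\mathbb{C})$ be tridiagonal ($q_{ij}(h)=0$ if $|i-j|>1$) and assume: (1) $\max_{1\le j\le N}\{|q_{j,j-1}(h)|,|q_{j,j+1}(h)|\}\to0$ as $h\to0$; (2) $\frac1h\max_{1\le j\le N}|q_{j,j-1}(h)+q_{jj}(h)+q_{j,j+1}(h)|\to0$ as $h\to0$. Let $Y_h=[y_j(h)]_{1\le j\le N}$ and $\Theta_h=[\theta_j(h)]_{1\le j\le N}$ be vectors in $\mathbb{C}^N$ for which there is a constant $C>0$, independent of $h$, with $\max\{\langle K_hY_h,Y_h\rangle,\langle K_h\Theta_h,\Theta_h\rangle\}\le C$. Then $\langle Q_hY_h,\Theta_h\rangle\to0$ as $h\to0$.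
   Context: $K_h=\frac1h\mathrm{tridiag}(-1,2,-1)\in\mathcal M_N(\mathbb{R})$; $\langle U,W\rangle=\sum_j u_j\overline{w_j}$. In conditions (1)-(2), the symbols $q_{1,0}(h)$ and $q_{N,N+1}(h)$, which are not entries of $Q_h$, denote given complex numbers (e.g. $0$). *)

(* Defs.v *)
From HB Require Import structures.
From mathcomp Require Import all_boot all_order all_algebra.
From mathcomp Require Import complex.
From mathcomp Require Import reals.
Set Implicit Arguments. Unset Strict Implicit. Unset Printing Implicit Defensive.
Import Order.TTheory GRing.Theory Num.Theory.
Local Open Scope ring_scope.
Local Open Scope complex_scope.

(* Real sequences indexed by N; "h = 1/(N+1) -> 0" is "N -> oo". *)
Definition tends_to0 (R : realType) (u : nat -> R) : Prop :=
  forall e : R, 0 < e -> exists M : nat, forall N : nat, (M <= N)%N -> `|u N| < e.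

Definition hN (R : realType) (N : nat) : R := (N.+1%:R)^-1.

(* 1-based entry q_{i,j} of the N x N matrix Q, extended by the given
   boundary numbers q_{1,0} = lo and q_{N,N+1} = hi, and 0 elsewhere. *)
Definition qent (R : realType) (N : nat) (Q : 'M[R[i]]_N) (lo hi : R[i])
    (i j : nat) : R[i] :=
  if (i == 1%N) && (j == 0%N) then lo
  else if (i == N) && (j == N.+1) then hi
  else if (0 < i)%N && (0 < j)%N then
    match insub i.-1 : option 'I_N, insub j.-1 : option 'I_N with
    | Some i', Some j' => Q i' j'
    | _, _ => 0
    end
  else 0.

Definition tridiagonal (R : realType) (N : nat) (Q : 'M[R[i]]_N) : Prop :=
  forall i j : 'I_N, (1 < `|(i : int) - (j : int)|)%N -> Q i j = 0.

Definition Kh (R : realType) (N : nat) : 'M[R[i]]_N :=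
  \matrix_(i < N, j < N)
    ((hN R N)^-1%:C *
     (if i == j then 2 else if (`|(i : int) - (j : int)| == 1)%N then -1 else 0)).

Definition cdot (R : realType) (N : nat) (U W : 'cV[R[i]]_N) : R[i] :=
  \sum_(j < N) U j ord0 * (W j ord0)^*.

Definition cabs (R : realType) (z : R[i]) : R := complex.Re `|z|.

(* Main.v *)
Require Import Defs.
From HB Require Import structures.
From mathcomp Require Import all_boot all_order all_algebra.
From mathcomp Require Import complex.
From mathcomp Require Import reals.
From mathcomp Require Import ring lra zify.
Set Implicit Arguments. Unset Strict Implicit. Unset Printing Implicit Defensive.
Import Order.TTheory GRing.Theory Num.Theory.
Local Open Scope ring_scope.
Local Open Scope complex_scope.

Lemma distS (i k : nat) : `|(i.+1:int) - (k.+1:int)|%N = `|(i:int) - (k:int)|%N.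
Proof. lia. Qed.
Lemma distlt (i j : nat) : (j < i)%N -> (1 < `|(i.+1:int) - (j:int)|)%N.
Proof. lia. Qed.

Section S.
Variable R : realType.
Implicit Types z w : R[i].

Lemma cabsC z : (cabs z)%:C = `|z|.
Proof. rewrite normc_def /cabs normc_def //. Qed.
Lemma cabs_ge0 z : 0 <= cabs z.
Proof. by rewrite -lecR cabsC normr_ge0. Qed.
Lemma cabsD z w : cabs (z + w) <= cabs z + cabs w.
Proof. by rewrite -lecR rmorphD /= !cabsC ler_normD. Qed.
Lemma cabsM z w : cabs (z * w) = cabs z * cabs w.
Proof. by apply: complexI; rewrite rmorphM /= !cabsC normrM. Qed.
Lemma cabsN z : cabs (- z) = cabs z.
Proof. by apply: complexI; rewrite !cabsC normrN. Qed.
Lemma cabsJ z : cabs (z^*) = cabs z.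
Proof. by apply: complexI; rewrite !cabsC normcJ. Qed.
Lemma cabs2 z : ((cabs z)^+2)%:C = z * z^*.
Proof. by rewrite rmorphXn /= cabsC sqr_normc. Qed.
Lemma cabs_sum (I : Type) (r : seq I) (F : I -> R[i]) :
  cabs (\sum_(i <- r) F i) <= \sum_(i <- r) cabs (F i).
Proof.
elim: r => [|a r IH]; first by rewrite !big_nil /cabs normr0.
rewrite !big_cons; apply: le_trans (cabsD _ _) _; lra.
Qed.

Definition ext N (Y : 'cV[R[i]]_N) (j : nat) : R[i] :=
  if (0 < j)%N then (if insub j.-1 : option 'I_N is Some k then Y k ord0 else 0) else 0.

Lemma extE N (Y : 'cV[R[i]]_N) (k : 'I_N) : ext Y k.+1 = Y k ord0.
Proof.
rewrite /ext /=; case: insubP => [k' _ Hk|]; last by rewrite ltn_ord.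
by rewrite (val_inj Hk).
Qed.
Lemma ext0 N (Y : 'cV[R[i]]_N) : ext Y 0 = 0.
Proof. by []. Qed.
Lemma ext_big N (Y : 'cV[R[i]]_N) j : (N < j)%N -> ext Y j = 0.
Proof.
rewrite /ext; case: ifP => // j0 Hj; case: insubP => // k _ Hk.
have := ltn_ord k; rewrite Hk; lia.
Qed.

Lemma qentE N (Q : 'M[R[i]]_N) lo hi (i j : 'I_N) : qent Q lo hi i.+1 j.+1 = Q i j.
Proof.
rewrite /qent /= andbF.
have -> : (j.+1 == N.+1) = false by apply/negbTE; rewrite eqSS neq_ltn ltn_ord.
rewrite andbF /= !insubT /= ?ltn_ord // => H1 H2; congr (Q _ _); exact: val_inj.
Qed.

Lemma three_term N (M : 'M[R[i]]_N) (f : nat -> nat -> R[i]) (Y : 'cV[R[i]]_N) :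
  (forall i j : 'I_N, M i j = f i.+1 j.+1) -> tridiagonal M -> forall i : 'I_N,
  (M *m Y) i ord0 = f i.+1 i * ext Y i + f i.+1 i.+1 * ext Y i.+1
                    + f i.+1 i.+2 * ext Y i.+2.
Proof.
move=> Hf Ht i; rewrite mxE.
set F := fun j => f i.+1 j * ext Y j.
have Fz (j : nat) : (1 < `|(i.+1:int) - (j:int)|)%N -> F j = 0.
  move=> Hd; rewrite /F; case: j Hd => [|k] Hd; first by rewrite ext0 mulr0.
  case: (ltnP k N) => Hk; last by rewrite ext_big ?mulr0.
  have := Ht i (Ordinal Hk); rewrite /= -distS => /(_ Hd) H0.
  by rewrite -[k]/(nat_of_ord (Ordinal Hk)) -Hf H0 mul0r.
have -> : \sum_j M i j * Y j ord0 = \sum_(0 <= j < N.+2) F j.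
  rewrite big_nat_recl // big_nat_recr //= /F ext0 ext_big // mulr0 add0r mulr0 addr0.
  by rewrite big_mkord; apply: eq_bigr => j _; rewrite Hf extE.
have hi : (i.+3 <= N.+2)%N by have := ltn_ord i; lia.
rewrite (@big_cat_nat _ _ _ i) //=; last by lia.
rewrite (@big_cat_nat _ _ _ i.+3 i) //=; try lia.
have -> : \sum_(0 <= j < i) F j = 0.
  by rewrite big_nat_cond big1 // => j /andP[/andP[_ Hj] _]; apply: Fz; lia.
have -> : \sum_(i.+3 <= j < N.+2) F j = 0.
  by rewrite big_nat_cond big1 // => j /andP[/andP[Hj _] _]; apply: Fz; lia.
rewrite big_ltn; last lia.
rewrite big_ltn; last lia.
rewrite big_ltn; last lia.
by rewrite big_geq ?leqnn // /F !addr0 add0r !addrA.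
Qed.

Lemma sum_parts (a : nat -> R[i]) N : a 0%N = 0 -> a N.+1 = 0 ->
  \sum_(0 <= i < N) (2 * a i.+1 - a i - a i.+2) * (a i.+1)^*
  = \sum_(0 <= k < N.+1) (a k.+1 - a k) * (a k.+1 - a k)^*.
Proof.
move=> a0 aN.
under [RHS]eq_bigr => k _ do rewrite rmorphB /= mulrBr.
rewrite sumrB big_nat_recr //= big_nat_recl //= aN a0 !rmorph0 !mulr0 addr0 add0r.
rewrite -sumrB; apply: eq_bigr => k _; ring.
Qed.

Definition fK N (j j' : nat) : R[i] := (hN R N)^-1%:C *
  (if j == j' then 2 else if (`|(j:int) - (j':int)| == 1)%N then -1 else 0).

Lemma Kh_f N (i j : 'I_N) : Kh R N i j = fK N i.+1 j.+1.
Proof. by rewrite /Kh mxE /fK eqSS distS. Qed.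

Lemma Kh_tri N : tridiagonal (Kh R N).
Proof.
move=> i j Hd; rewrite /Kh mxE.
have -> : (i == j) = false by apply/negbTE/eqP => E; move: Hd; rewrite E; lia.
have -> : (`|(i:int) - (j:int)| == 1)%N = false by apply/negbTE/eqP; lia.
by rewrite mulr0.
Qed.

Definition Den N (Y : 'cV[R[i]]_N) : R :=
  \sum_(0 <= k < N.+1) cabs (ext Y k.+1 - ext Y k) ^+ 2.

Lemma energy N (Y : 'cV[R[i]]_N) :
  cdot (Kh R N *m Y) Y = ((N.+1)%:R * Den Y)%:C.
Proof.
rewrite /cdot rmorphM /= /Den rmorph_sum /=.
under [in RHS]eq_bigr => k _ do rewrite cabs2.
rewrite -sum_parts ?ext0 ?ext_big // big_mkord mulr_sumr.
apply: eq_bigr => i _.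
rewrite (three_term Y (@Kh_f N) (@Kh_tri N)) extE /fK /hN invrK.
have -> : (i.+1 == i) = false by apply/negbTE; lia.
have -> : (i.+1 == i.+2) = false by apply/negbTE; lia.
have -> : (`|(i.+1:int) - (i:int)| == 1)%N by apply/eqP; lia.
have -> : (`|(i.+1:int) - (i.+2:int)| == 1)%N by apply/eqP; lia.
rewrite eqxx rmorph_nat; ring.
Qed.

Lemma ptwise (a : nat -> R[i]) (a0 : a 0%N = 0) j :
  cabs (a j) ^+ 2 <= j%:R * \sum_(0 <= k < j) cabs (a k.+1 - a k) ^+ 2.
Proof.
elim: j => [|j IH]; first by rewrite a0 /cabs normr0 expr0n /= mul0r.
rewrite big_nat_recr //=.
set T := \sum_(0 <= k < j) _ in IH *.
have T0 : 0 <= T by apply: sumr_ge0 => k _; rewrite sqr_ge0.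
have Hz : cabs (a j.+1) <= cabs (a j) + cabs (a j.+1 - a j).
  by apply: le_trans (cabsD _ _); rewrite addrC subrK.
have := cabs_ge0 (a j); have := cabs_ge0 (a j.+1); have := cabs_ge0 (a j.+1 - a j).
move: Hz IH; set x := cabs (a j); set y := cabs (a j.+1 - a j); set z := cabs (a j.+1).
have jr : 0 <= (j%:R : R) by [].
rewrite -natr1.
move=> Hz IH y0 z0 x0.
have Hzz : z ^+ 2 <= (x + y) ^+ 2 by rewrite ler_sqr ?nnegrE; lra.
apply: le_trans Hzz _.
have Hs : 0 <= (x - j%:R * y) ^+ 2 by rewrite sqr_ge0.
have [jp|jle] := ltrP 0 (j%:R : R); last first.
  have j0 : (j%:R : R) = 0 by lra.
  rewrite j0 mul0r in IH; have x00 : x = 0 by nra.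
  rewrite x00 j0; nra.
nra.
Qed.

Lemma ptwise_N N (Y : 'cV[R[i]]_N) j : (j <= N.+1)%N ->
  cabs (ext Y j) ^+ 2 <= (N.+1)%:R * Den Y.
Proof.
move=> Hj; apply: le_trans (ptwise (ext0 Y) j) _.
rewrite /Den [X in _ <= _ * X](@big_cat_nat _ _ _ j) //=.
set S1 := \sum_(0 <= k < j) _; set S2 := \sum_(j <= k < N.+1) _.
have S10 : 0 <= S1 by apply: sumr_ge0 => k _; rewrite sqr_ge0.
have S20 : 0 <= S2 by apply: sumr_ge0 => k _; rewrite sqr_ge0.
have : (j%:R : R) <= (N.+1)%:R by rewrite ler_nat.
have : 0 <= (j%:R : R) by [].
nra.
Qed.

Lemma cross (x b : nat -> R) N (m C : R) : 0 < m -> N%:R <= m ->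
  (forall i, 0 <= x i) -> (forall i, 0 <= b i) ->
  m * \sum_(0 <= i < N) x i ^+ 2 <= C ->
  (forall i, (i < N)%N -> b i ^+ 2 <= C) ->
  \sum_(0 <= i < N) x i * b i <= C.
Proof.
move=> m0 Nm x0 b0 Hx Hb.
have Sx0 : 0 <= \sum_(0 <= i < N) x i ^+ 2 by apply: sumr_ge0 => i _; rewrite sqr_ge0.
have Hb' : \sum_(0 <= i < N) b i ^+ 2 <= N%:R * C.
  apply: le_trans (_ : \sum_(0 <= i < N) C <= _).
    rewrite big_nat_cond [X in _ <= X]big_nat_cond; apply: ler_sum => i /andP[/andP[_ Hi] _].
    exact: Hb.
  by rewrite sumr_const_nat subn0 mulr_natl.
have H2 : \sum_(0 <= i < N) (2 * m) * (x i * b i)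
    <= \sum_(0 <= i < N) (m ^+ 2 * x i ^+ 2 + b i ^+ 2).
  apply: ler_sum => i _.
  have : 0 <= (m * x i - b i) ^+ 2 by rewrite sqr_ge0.
  nra.
move: H2; rewrite -mulr_sumr big_split /= -mulr_sumr.
move=> H2.
have C0 : 0 <= C by apply: le_trans Hx; apply: mulr_ge0 => //; apply: ltW.
have h1 : m ^+ 2 * \sum_(0 <= i < N) x i ^+ 2 <= m * C.
  by rewrite expr2 -mulrA; apply: ler_wpM2l => //; exact: ltW.
have h2 : N%:R * C <= m * C by apply: ler_wpM2r.
have h3 : m * (\sum_(0 <= i < N) x i * b i) <= m * C by lra.
by rewrite -(ler_pM2l m0).
Qed.

Lemma main_bound N (Q : 'M[R[i]]_N) lo hi (Y Th : 'cV[R[i]]_N) (C : R) :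
  tridiagonal Q -> (N.+1)%:R * Den Y <= C -> (N.+1)%:R * Den Th <= C ->
  cabs (cdot (Q *m Y) Th) <=
  C * ((hN R N)^-1 * \big[Num.max/0]_(1 <= j < N.+1)
      cabs (qent Q lo hi j j.-1 + qent Q lo hi j j + qent Q lo hi j j.+1)
   + 2 * \big[Num.max/0]_(1 <= j < N.+1)
      Num.max (cabs (qent Q lo hi j j.-1)) (cabs (qent Q lo hi j j.+1))).
Proof.
move=> Ht HY HT.
set q := qent Q lo hi; set w := ext Y; set t := ext Th.
set Rm := \big[Num.max/0]_(1 <= j < N.+1) _.
set Aq := \big[Num.max/0]_(1 <= j < N.+1) _.
have Hm : (N.+1%:R : R) = (hN R N)^-1 by rewrite /hN invrK.
rewrite -Hm.
have mpos : (0 : R) < N.+1%:R by rewrite ltr0n.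
have Den0 : 0 <= Den Y by apply: sumr_ge0 => k _; rewrite sqr_ge0.
have C0 : 0 <= C by apply: le_trans HY; apply: mulr_ge0 => //; apply: ltW.
have Rm0 : 0 <= Rm by apply: bigmax_ge_id.
have Aq0 : 0 <= Aq by apply: bigmax_ge_id.
have inI i : (i < N)%N -> i.+1 \in index_iota 1 N.+1 by rewrite mem_index_iota; lia.
have HR i : (i < N)%N -> cabs (q i.+1 i + q i.+1 i.+1 + q i.+1 i.+2) <= Rm.
  move=> Hi; exact: (le_bigmax_seq 0 _ xpredT (fun j =>
     cabs (q j j.-1 + q j j + q j j.+1)) (inI i Hi) isT).
have HAl i : (i < N)%N -> cabs (q i.+1 i) <= Aq.
  move=> Hi; apply: le_trans (le_bigmax_seq 0 _ xpredT (fun j =>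
     Num.max (cabs (q j j.-1)) (cabs (q j j.+1))) (inI i Hi) isT).
  by rewrite /= le_max lexx.
have HAr i : (i < N)%N -> cabs (q i.+1 i.+2) <= Aq.
  move=> Hi; apply: le_trans (le_bigmax_seq 0 _ xpredT (fun j =>
     Num.max (cabs (q j j.-1)) (cabs (q j j.+1))) (inI i Hi) isT).
  by rewrite /= le_max lexx orbT.
have Hw i : (i <= N.+1)%N -> cabs (w i) ^+ 2 <= C.
  by move=> Hi; apply: le_trans HY; apply: ptwise_N.
have Ht' i : (i <= N.+1)%N -> cabs (t i) ^+ 2 <= C.
  by move=> Hi; apply: le_trans HT; apply: ptwise_N.
set x := fun i => cabs (w i.+1 - w i).
set b := fun i => cabs (t i.+1).
have E : cdot (Q *m Y) Th = \sum_(0 <= i < N)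
   ((q i.+1 i * w i + q i.+1 i.+1 * w i.+1 + q i.+1 i.+2 * w i.+2) * (t i.+1)^*).
  rewrite /cdot big_mkord; apply: eq_bigr => i _.
  have Hf : forall i' j' : 'I_N, Q i' j' = q i'.+1 j'.+1 by move=> i' j'; rewrite /q qentE.
  by rewrite (three_term Y Hf Ht) /t (extE Th) /w extE.
rewrite E; apply: le_trans; first exact: cabs_sum.
apply: le_trans (_ : \sum_(0 <= i < N) (Rm * C + Aq * (x i * b i) + Aq * (x i.+1 * b i)) <= _).
  rewrite big_nat_cond [X in _ <= X]big_nat_cond; apply: ler_sum => i /andP[/andP[_ Hi] _].
  have -> : (q i.+1 i * w i + q i.+1 i.+1 * w i.+1 + q i.+1 i.+2 * w i.+2) * (t i.+1)^*
     = ((q i.+1 i + q i.+1 i.+1 + q i.+1 i.+2) * w i.+1 + (- q i.+1 i) * (w i.+1 - w i)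
        + q i.+1 i.+2 * (w i.+2 - w i.+1)) * (t i.+1)^* by ring.
  rewrite cabsM cabsJ.
  have H1 := cabsD ((q i.+1 i + q i.+1 i.+1 + q i.+1 i.+2) * w i.+1 + (- q i.+1 i) * (w i.+1 - w i))
       (q i.+1 i.+2 * (w i.+2 - w i.+1)).
  have H2 := cabsD ((q i.+1 i + q i.+1 i.+1 + q i.+1 i.+2) * w i.+1) ((- q i.+1 i) * (w i.+1 - w i)).
  rewrite !cabsM cabsN in H1 H2.
  have := HR i Hi; have := HAl i Hi; have := HAr i Hi.
  have := Hw i.+1 (ltnW Hi); have := Ht' i.+1 (ltnW Hi).
  rewrite /x /b.
  move: H1 H2.
  set r := cabs (q i.+1 i + q i.+1 i.+1 + q i.+1 i.+2).
  set ql := cabs (q i.+1 i); set qr := cabs (q i.+1 i.+2).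
  set wi := cabs (w i.+1); set tt := cabs (t i.+1).
  set e1 := cabs (w i.+1 - w i); set e2 := cabs (w i.+2 - w i.+1).
  set s := cabs (_ + _ + _ * _).
  have := cabs_ge0 (q i.+1 i + q i.+1 i.+1 + q i.+1 i.+2).
  have := cabs_ge0 (q i.+1 i); have := cabs_ge0 (q i.+1 i.+2).
  have := cabs_ge0 (w i.+1); have := cabs_ge0 (t i.+1).
  have := cabs_ge0 (w i.+1 - w i); have := cabs_ge0 (w i.+2 - w i.+1).
  rewrite -/r -/ql -/qr -/wi -/tt -/e1 -/e2.
  move=> e20 e10 tt0 wi0 qr0 ql0 r0 H1 H2 Ht2 Hw2 Hqr Hql Hr.
  have Hwt : wi * tt <= C by nra.
  have h1 : r * wi * tt <= Rm * C.
    have : r * (wi * tt) <= Rm * C by apply: ler_pM => //; apply: mulr_ge0.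
    by rewrite mulrA.
  have h2 : ql * e1 * tt <= Aq * (e1 * tt).
    by rewrite -mulrA; apply: ler_wpM2r => //; apply: mulr_ge0.
  have h3 : qr * e2 * tt <= Aq * (e2 * tt).
    by rewrite -mulrA; apply: ler_wpM2r => //; apply: mulr_ge0.
  have : s <= r * wi + ql * e1 + qr * e2 by lra.
  move=> Hs.
  have : s * tt <= (r * wi + ql * e1 + qr * e2) * tt by apply: ler_wpM2r.
  nra.
rewrite big_split big_split /= !sumr_const_nat subn0 -!mulr_sumr.
have Hc1 : \sum_(0 <= i < N) x i * b i <= C.
  apply: (cross (m := N.+1%:R)) => //; first by rewrite ler_nat.
  - by move=> i; apply: cabs_ge0.
  - by move=> i; apply: cabs_ge0.
  - apply: le_trans HY; apply: ler_wpM2l; first exact: ltW.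
    rewrite /Den big_nat_recr //= lerDl; exact: sqr_ge0.
  - by move=> i Hi; apply: Ht'; lia.
have Hc2 : \sum_(0 <= i < N) x i.+1 * b i <= C.
  apply: (cross (x := fun i => x i.+1) (m := N.+1%:R)) => //; first by rewrite ler_nat.
  - by move=> i; apply: cabs_ge0.
  - by move=> i; apply: cabs_ge0.
  - apply: le_trans HY; apply: ler_wpM2l; first exact: ltW.
    rewrite /Den big_nat_recl //= lerDr; exact: sqr_ge0.
  - by move=> i Hi; apply: Ht'; lia.
have HN : (N%:R : R) <= N.+1%:R by rewrite ler_nat.
rewrite -mulr_natr.
have : 0 <= Rm * C by apply: mulr_ge0.
have : Aq * \sum_(0 <= i < N) x i * b i <= Aq * C by apply: ler_wpM2l.
have : Aq * \sum_(0 <= i < N) x i.+1 * b i <= Aq * C by apply: ler_wpM2l.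
nra.
Qed.
End S.

Lemma final_ineq (R : realType) (Z A B C e : R) : 0 < C -> 0 < e -> 0 <= Z ->
  Z <= C * (B + 2 * A) -> `|A| < e / (3 * C) -> `|B| < e / (3 * C) -> `|Z| < e.
Proof.
move=> C0 e0 Z0 H HA HB; rewrite ger0_norm //.
have Ck : C * (e / (3 * C)) * 3 = e.
  by field; rewrite gt_eqF.
have h1 : C * B <= C * `|B| by apply: ler_wpM2l; [exact: ltW | exact: ler_norm].
have h2 : C * A <= C * `|A| by apply: ler_wpM2l; [exact: ltW | exact: ler_norm].
have h3 : C * `|B| < C * (e / (3 * C)) by rewrite ltr_pM2l.
have h4 : C * `|A| < C * (e / (3 * C)) by rewrite ltr_pM2l.
move: H; rewrite mulrDr mulrCA => H.
lra.
Qed.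

Unset Implicit Arguments.

Theorem lemma6 (R : realType)
  (Q : forall N : nat, 'M[R[i]]_N) (lo hi : nat -> R[i])
  (Y Th : forall N : nat, 'cV[R[i]]_N) :
  (forall N : nat, (0 < N)%N -> tridiagonal (Q N)) ->
  tends_to0 (fun N : nat =>
    \big[Num.max/0]_(1 <= j < N.+1)
      Num.max (cabs (qent (Q N) (lo N) (hi N) j j.-1))
              (cabs (qent (Q N) (lo N) (hi N) j j.+1))) ->
  tends_to0 (fun N : nat =>
    (hN R N)^-1 *
    \big[Num.max/0]_(1 <= j < N.+1)
      cabs (qent (Q N) (lo N) (hi N) j j.-1 + qent (Q N) (lo N) (hi N) j j
             + qent (Q N) (lo N) (hi N) j j.+1)) ->
  (exists C : R, 0 < C /\ forall N : nat, (0 < N)%N ->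
     cdot (Kh R N *m Y N) (Y N) <= C%:C /\
     cdot (Kh R N *m Th N) (Th N) <= C%:C) ->
  tends_to0 (fun N : nat => cabs (cdot (Q N *m Y N) (Th N))).
Proof.
move=> Ht HA HB [C [C0 HC]] e e0.
have e'0 : 0 < e / (3 * C) by apply: divr_gt0 => //; apply: mulr_gt0.
have [M1 HM1] := HA _ e'0; have [M2 HM2] := HB _ e'0.
exists (maxn M1 M2).+1 => N HN.
have N0 : (0 < N)%N by lia.
have [HY HT] := HC N N0.
rewrite energy lecR in HY; rewrite energy lecR in HT.
have H := main_bound (lo N) (hi N) (Ht N N0) HY HT.
apply: (final_ineq C0 e0 (cabs_ge0 _) H).
- by apply: HM1; lia.
- by apply: HM2; lia.
Qed.
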